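(* Let $n\ge 1$ and let $f:\{0,1\}^n\to\{0,1\}^n$. The map $G_f:\mathcal{X}\to\mathcal{X}$ is topologically transitive (with respect to the metric $d$) if and only if the asynchronous iteration graph $\Gamma(f)$ is strongly connected.
   Context: Write $\mathbb{B}=\{0,1\}$ and $\llbracket 1;n\rrbracket=\{1,\dots,n\}$. For $f=(f_1,\dots,f_n):\mathbb{B}^n\to\mathbb{B}^n$, define $F_f:\llbracket 1;n\rrbracket\times\mathbb{B}^n\to\mathbb{B}^n$ by $F_f(i,x)=(x_1,\dots,x_{i-1},f_i(x),x_{i+1},\dots,x_n)$. Let $\mathcal{X}=\llbracket 1;n\rrbracket^{\mathbb{N}}\times\mathbb{B}^n$ and define $G_f:\mathcal{X}\to\mathcal{X}$ by $G_f(s,x)=(\sigma(s),F_f(s_0,x))$, where $\sigma(s)_t=s_{t+1}$ for all $t\in\mathbb{N}$. The metric on $\mathcal{X}$ is $d((s,x),(s',x'))=\sum_{i=1}^n|x_i-x'_i|+\frac{9}{n}\sum_{t\in\mathbb{N}}\frac{|s_t-s'_t|}{10^{t+1}}$. $G_f$ is topologically transitive if for all $X,Y\in\mathcal{X}$ and all open balls $B_X,B_Y$ centered at $X$ and $Y$, there exist $X'\in B_X$ and $t\in\mathbb{N}$ with $G_f^t(X')\in B_Y$. The asynchronous iteration graph $\Gamma(f)$ is the directed graph with vertex set $\mathbb{B}^n$ containing, for every $x\in\mathbb{B}^n$ and every $i\in\llbracket 1;n\rrbracket$, an arc from $x$ to $F_f(i,x)$. *)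

(* Defs.v *)
From mathcomp Require Import all_boot.
From Stdlib Require Import Reals.
From Coquelicot Require Import Coquelicot.

Set Implicit Arguments.
Unset Strict Implicit.
Unset Printing Implicit Defensive.

(* B^n : boolean vectors indexed by 'I_n (index i : 'I_n stands for i+1). *)
Definition Bn (n : nat) := {ffun 'I_n -> bool}.

Definition Ff (n : nat) (f : Bn n -> Bn n) (i : 'I_n) (x : Bn n) : Bn n :=
  [ffun j => if j == i then f x j else x j].

(* Phase space X = [[1;n]]^N * B^n ; strategies take values in 'I_n
   (shifted by one, which does not affect |s_t - s'_t|). *)
Definition Xsp (n : nat) : Type := ((nat -> 'I_n) * Bn n)%type.

Definition Gf (n : nat) (f : Bn n -> Bn n) (X : Xsp n) : Xsp n :=
  (fun t => X.1 t.+1, Ff f (X.1 O) X.2).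

Definition dist (n : nat) (X Y : Xsp n) : R :=
  (\big[Rplus/0%R]_(i < n) Rabs (INR (X.2 i) - INR (Y.2 i))
   + (9 / INR n) * Series (fun t => Rabs (INR (X.1 t) - INR (Y.1 t)) / 10 ^ (t.+1)))%R.

Definition topologically_transitive (n : nat) (f : Bn n -> Bn n) : Prop :=
  forall (X Y : Xsp n) (rX rY : R), (0 < rX)%R -> (0 < rY)%R ->
    exists X' : Xsp n, (dist X X' < rX)%R /\
      exists t : nat, (dist Y (iter t (Gf f) X') < rY)%R.

Definition gamma_arc (n : nat) (f : Bn n -> Bn n) : rel (Bn n) :=
  fun x y => [exists i : 'I_n, Ff f i x == y].

Definition strongly_connected (n : nat) (f : Bn n -> Bn n) : Prop :=
  forall x y : Bn n, connect (gamma_arc f) x y.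

(* Main.v *)
Require Import Defs.
From HB Require Import structures.
From mathcomp Require Import all_boot.
From Stdlib Require Import Reals Lra.
From Coquelicot Require Import Coquelicot.
From Stdlib Require Import FunctionalExtensionality.
From Stdlib Require ZArith.

HB.instance Definition _ := Monoid.isComLaw.Build R 0%R Rplus (fun a b c => esym (Rplus_assoc a b c)) Rplus_comm Rplus_0_l.

Lemma sum_nonneg n (F : 'I_n -> R) : (forall i, 0 <= F i)%R -> (0 <= \big[Rplus/0%R]_(i < n) F i)%R.
Proof. move=> H; apply: (big_ind (fun x => 0 <= x)%R) => //; [lra| move=> *; lra]. Qed.

Lemma sum_ge n (F : 'I_n -> R) j : (forall i, 0 <= F i)%R -> (F j <= \big[Rplus/0%R]_(i < n) F i)%R.
Proof.
move=> H; rewrite (bigD1 j) //=.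
have : (0 <= \big[Rplus/0%R]_(i < n | i != j) F i)%R.
  by apply: (big_ind (fun x => 0 <= x)%R) => //; [lra| move=> *; lra].
move=> h; rewrite -{1}(Rplus_0_r (F j)); exact: Rplus_le_compat_l.
Qed.

Definition term n (s s' : nat -> 'I_n) t : R :=
  Rabs (INR (s t) - INR (s' t)) / 10 ^ t.+1.

Lemma term_ge0 n s s' t : (0 <= @term n s s' t)%R.
Proof.
rewrite /term; apply: Rdiv_le_0_compat; first exact: Rabs_pos.
apply: pow_lt; lra.
Qed.

Lemma absdiff_le n (a b : 'I_n) : (Rabs (INR a - INR b) <= INR n)%R.
Proof.
have ha := ltn_ord a; have hb := ltn_ord b.
have /lt_INR ha' : (a < n)%coq_nat by apply/ltP.
have /lt_INR hb' : (b < n)%coq_nat by apply/ltP.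
have := pos_INR a; have := pos_INR b.
move=> *; apply Rabs_le; lra.
Qed.

Lemma term_le n s s' (t k : nat) : (k <= t)%nat ->
  (@term n s s' t <= (INR n / 5 ^ k) * (/2) ^ t)%R.
Proof.
move=> hk; rewrite /term.
have h10 : (10 ^ t.+1 = 10 * (5 ^ t * 2 ^ t))%R.
  by rewrite -Rpow_mult_distr; replace (5*2)%R with 10%R by lra.
have p5 : (0 < 5 ^ t)%R by apply: pow_lt; lra.
have p5k : (0 < 5 ^ k)%R by apply: pow_lt; lra.
have p2 : (0 < 2 ^ t)%R by apply: pow_lt; lra.
have h5 : (5 ^ k <= 5 ^ t)%R by apply: Rle_pow; [lra| apply/leP].
have hA := @absdiff_le n (s t) (s' t).
have hA0 := Rabs_pos (INR (s t) - INR (s' t)).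
rewrite h10 pow_inv.
apply (Rle_trans _ (INR n / (5 ^ t * 2 ^ t))).
  rewrite /Rdiv; apply Rmult_le_compat; try lra.
  - left; apply Rinv_0_lt_compat; nra.
  - apply Rinv_le_contravar; nra.
rewrite /Rdiv Rinv_mult Rmult_assoc; apply Rmult_le_compat_l; first exact: pos_INR.
apply Rmult_le_compat_r.
  left; apply Rinv_0_lt_compat; lra.
apply Rinv_le_contravar; lra.
Qed.

Lemma ex_series_geom_scal (C : R) : ex_series (fun t => C * (/2) ^ t)%R.
Proof.
apply: ex_series_scal_l; eexists; apply: is_series_geom.
rewrite Rabs_pos_eq; lra.
Qed.

Lemma Series_geom_scal (C : R) : Series (fun t => C * (/2) ^ t)%R = (2 * C)%R.
Proof.
rewrite Series_scal_l (is_series_unique _ (/ (1 - /2))).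
  field.
apply: is_series_geom; rewrite Rabs_pos_eq; lra.
Qed.

Lemma ex_series_term n s s' : ex_series (@term n s s').
Proof.
apply: (ex_series_le _ (fun t => (INR n / 5 ^ 0) * (/2) ^ t)%R); last exact: ex_series_geom_scal.
move=> t; rewrite /norm /= /abs /= Rabs_pos_eq; last exact: term_ge0.
exact: (@term_le n s s' t 0 (leq0n t)).
Qed.

Lemma Series0 : Series (fun _ => 0%R) = 0%R.
Proof.
rewrite (Series_ext _ (fun t => 0 * (/2) ^ t)%R); last by move=> t; ring.
by rewrite Series_scal_l Rmult_0_l.
Qed.

Lemma Series_term_ge0 n s s' : (0 <= Series (@term n s s'))%R.
Proof.
rewrite -Series0; apply: Series_le; last exact: ex_series_term.
move=> t; split; [lra| exact: term_ge0].
Qed.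

Lemma dist_ge n (hn : (0 < n)%nat) (X Y : Xsp n) :
  (\big[Rplus/0%R]_(i < n) Rabs (INR (X.2 i) - INR (Y.2 i)) <= Defs.dist X Y)%R.
Proof.
rewrite /Defs.dist.
have h1 : (0 < INR n)%R by apply: lt_0_INR; apply/ltP.
have h2 : (0 <= 9 / INR n)%R by apply: Rdiv_le_0_compat; lra.
have h3 := @Series_term_ge0 n X.1 Y.1.
rewrite /term in h3.
have := Rmult_le_pos _ _ h2 h3. lra.
Qed.

Lemma dist_eq2 n (hn : (0 < n)%nat) (X Y : Xsp n) : (Defs.dist X Y < 1)%R -> X.2 = Y.2.
Proof.
move=> hd; apply/ffunP => i; apply/eqP; apply/negPn/negP => hne.
have hge := @dist_ge n hn X Y.
have h1 : (1 <= Rabs (INR (X.2 i) - INR (Y.2 i)))%R.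
  move: hne; case: (X.2 i); case: (Y.2 i) => //= _.
    by rewrite Rminus_0_r Rabs_R1; lra.
  by rewrite Rminus_0_l Rabs_Ropp Rabs_R1; lra.
have := @sum_ge n (fun i => Rabs (INR (X.2 i) - INR (Y.2 i))) i (fun j => Rabs_pos _).
move=> /= h; have := Rle_trans _ _ _ h hge; lra.
Qed.

Lemma dist_self n (X : Xsp n) : Defs.dist X X = 0%R.
Proof.
rewrite /Defs.dist big1; last by move=> i _; rewrite Rminus_diag Rabs_R0.
rewrite (Series_ext _ (fun _ => 0%R)) ?Series0; first ring.
by move=> t; rewrite Rminus_diag Rabs_R0 /Rdiv Rmult_0_l.
Qed.

Fixpoint run n (f : Bn n -> Bn n) (s : nat -> 'I_n) (j : nat) (z : Bn n) : Bn n :=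
  match j with O => z | S j' => run n f (fun t => s t.+1) j' (Ff f (s O) z) end.

Arguments run {n}.

Lemma iter_Gf n (f : Bn n -> Bn n) j s z :
  iter j (Gf f) (s, z) = (fun t => s (j + t)%nat, run f s j z).
Proof.
elim: j s z => [|j IH] s z.
  by rewrite /=; f_equal; apply: functional_extensionality.
rewrite iterSr /Gf /= IH /=; f_equal.
Qed.

Lemma iter_conn n (f : Bn n -> Bn n) j (X : Xsp n) :
  connect (gamma_arc f) X.2 (iter j (Gf f) X).2.
Proof.
elim: j => [|j IH] /=; first exact: connect0.
apply: (connect_trans IH); apply: connect1.
by apply/existsP; exists ((iter j (Gf f) X).1 O).
Qed.

Lemma run_ext n (f : Bn n -> Bn n) j s s' z :
  (forall t, (t < j)%nat -> s t = s' t) -> run f s j z = run f s' j z.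
Proof.
elim: j s s' z => [|j IH] s s' z H //=.
rewrite H //; apply: IH => t ht; exact: H.
Qed.

Lemma run_add n (f : Bn n -> Bn n) a b s z :
  run f s (a + b) z = run f (fun t => s (a + t)%nat) b (run f s a z).
Proof.
elim: a s z => [|a IH] s z //=.
Qed.

Lemma run_seq n (f : Bn n -> Bn n) (l : seq 'I_n) d z :
  run f (fun t => nth d l t) (size l) z = foldl (fun z i => Ff f i z) z l.
Proof. by elim: l z => [|i l IH] z //=. Qed.

Lemma connect_seq n (f : Bn n -> Bn n) x y : connect (gamma_arc f) x y ->
  exists l : seq 'I_n, foldl (fun z i => Ff f i z) x l = y.
Proof.
move/connectP=> [p]; elim: p x => [|b p IH] x /=.
  by move=> _ ->; exists [::].
move=> /andP [hab hp] hl.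
move/existsP: hab => [i /eqP hi].
have [l hl'] := IH b hp hl.
by exists (i :: l); rewrite /= hi.
Qed.

Lemma pow5_ge k : (INR k <= 5 ^ k)%R.
Proof.
elim: k => [|k IH]; first by rewrite /=; lra.
rewrite S_INR /=; have : (1 <= 5 ^ k)%R by apply: pow_R1_Rle; lra.
lra.
Qed.

Lemma choose_k {r} : (0 < r)%R -> exists k : nat, (18 / 5 ^ k < r)%R.
Proof.
move=> hr; have [hu _] := archimed (18 / r).
have hz : (0 <= IZR (up (18 / r)))%R.
  have : (0 < 18 / r)%R by apply: Rdiv_lt_0_compat; lra. lra.
have [k hk] : exists k : nat, IZR (up (18 / r)) = INR k.
  exists (Z.to_nat (up (18 / r))); rewrite INR_IZR_INZ Znat.Z2Nat.id //.
  by apply: le_IZR.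
exists k; rewrite hk in hu.
have h5 := pow5_ge k.
have hrr : (r * (18 / r) = 18)%R by field; lra.
have hp : (0 < 5 ^ k)%R by apply: pow_lt; lra.
have h18 : (18 < r * 5 ^ k)%R by nra.
apply (Rmult_lt_reg_r (5 ^ k)) => //.
have -> : (18 / 5 ^ k * 5 ^ k = 18)%R by field; lra.
lra.
Qed.

Theorem proposition1 (n : nat) (hn : (0 < n)%nat) (f : Bn n -> Bn n) :
  topologically_transitive f <-> strongly_connected f.
Proof.
split.
- move=> H x y.
  pose s0 := fun _ : nat => Ordinal hn.
  have [X' [hX [t hY]]] := H (s0, x) (s0, y) 1%R 1%R Rlt_0_1 Rlt_0_1.
  have e1 := @dist_eq2 n hn _ _ hX. have e2 := @dist_eq2 n hn _ _ hY.
  rewrite /= in e1 e2; rewrite e1 e2; exact: iter_conn.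
- move=> H [s x] [s' y] rX rY hX hY.
  have [k hk] := choose_k hX.
  have [l hl] := @connect_seq n f _ _ (H (run f s k x) y).
  pose m := size l.
  pose d := s O.
  pose s'' := fun t => if (t < k)%nat then s t else
      if (t - k < m)%nat then nth d l (t - k) else s' (t - k - m)%nat.
  exists (s'', x); split.
  + rewrite /Defs.dist /= big1; last by move=> i _; rewrite Rminus_diag Rabs_R0.
    have hS : (Series (@term n s s'') <= 2 * (INR n / 5 ^ k))%R.
      rewrite -Series_geom_scal; apply: Series_le; last exact: ex_series_geom_scal.
      move=> t; split; first exact: term_ge0.
      case: (ltnP t k) => htk.
        rewrite /term /s'' htk Rminus_diag Rabs_R0 /Rdiv Rmult_0_l.
        apply: Rmult_le_pos; last by apply: pow_le; lra.
        apply: Rmult_le_pos; first exact: pos_INR.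
        left; apply: Rinv_0_lt_compat; apply: pow_lt; lra.
      exact: term_le.
    rewrite /term in hS.
    have h1 : (0 < INR n)%R by apply: lt_0_INR; apply/ltP.
    have hp : (0 < 5 ^ k)%R by apply: pow_lt; lra.
    have h2 : (0 <= 9 / INR n)%R by apply: Rdiv_le_0_compat; lra.
    have := Rmult_le_compat_l _ _ _ h2 hS.
    have -> : (9 / INR n * (2 * (INR n / 5 ^ k)) = 18 / 5 ^ k)%R by field; lra.
    move=> hh; simpl in hh; lra.
  + exists (k + m)%nat.
    rewrite iter_Gf run_add (@run_ext _ _ k s'' s); last first.
      by move=> t ht; rewrite /s'' ht.
    rewrite (@run_ext _ _ m _ (fun t => nth d l t)); last first.
      by move=> t ht; rewrite /s'' ltnNge leq_addr /= addKn ht.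
    rewrite run_seq hl.
    have -> : (fun t => s'' (k + m + t)%nat) = s'.
      apply: functional_extensionality => t.
      rewrite /s'' ltnNge -addnA leq_addr /= addKn ltnNge leq_addr /=.
      by rewrite addKn.
    by rewrite dist_self.
Qed.
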